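(* Let $g,h\in G_a$ be covered by $\widehat g,\widehat h\in\widehat G_a$ respectively. (1) If $g$ and $h$ both fix a point $x\in X$, then $\widehat{\mathrm{rot}}_{x,\alpha}(\widehat g\widehat h)=\widehat{\mathrm{rot}}_{x,\alpha}(\widehat g)+\widehat{\mathrm{rot}}_{x,\alpha}(\widehat h)$. (2) If $g$ and $h$ both preserve a Borel probability measure $\mu$ on $X$, then $\widehat{\mathrm{rot}}_{\mu,\alpha}(\widehat g\widehat h)=\widehat{\mathrm{rot}}_{\mu,\alpha}(\widehat g)+\widehat{\mathrm{rot}}_{\mu,\alpha}(\widehat h)$, provided each term exists.
   Context: $A$ is $\mathbb{Z}$ or the discrete group $\mathbb{R}$. $X$ is a path-connected space, $a\in\mathrm{H}^1(X;A)$, $\pi\colon\widehat X_a\to X$ a principal $A$-bundle with holonomy $a$, $T_r$ the action of $r\in A$. $\widehat G_a$ is the group of bundle automorphisms of $\widehat X_a$ (homeomorphisms $\widehat g$ with $\pi\circ\widehat g=g\circ\pi$ for a homeomorphism $g$ of $X$, said to cover $g$), and $G_a$ the group of homeomorphisms of $X$ preserving $a$. $\alpha$ is a real singular $1$-cocycle representing $a$, and $\theta\colon\widehat X_a\to\mathbb{R}$ a $0$-cochain with $d\theta=\pi^*\alpha$ and $\theta(T_r\widehat y)=\theta(\widehat y)+r$. For $x\in X$, $\rho_{x,\alpha}(\widehat g)=\theta(\widehat g(\widehat x))-\theta(\widehat x)$ with $\widehat x\in\pi^{-1}(x)$ (independent of choices); $\widehat{\mathrm{rot}}_{x,\alpha}(\widehat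 g)=\lim_{n\to\infty}\rho_{x,\alpha}(\widehat g^n)/n$ when it exists; for a $g$-invariant Borel probability measure $\mu$, $\widehat{\mathrm{rot}}_{\mu,\alpha}(\widehat g)=\int_X\rho_{x,\alpha}(\widehat g)\,d\mu(x)$ when it exists. *)

(* Defs.v *)
From HB Require Import structures.
From mathcomp Require Import all_boot all_order all_algebra.
From mathcomp Require Import all_classical all_reals all_analysis.
Set Implicit Arguments. Unset Strict Implicit. Unset Printing Implicit Defensive.
Import Order.TTheory GRing.Theory Num.Theory.
Import numFieldNormedType.Exports.
Local Open Scope classical_set_scope.
Local Open Scope ring_scope.

(* The coefficient group A: either Z or the discrete group R, both viewed
   as subgroups of R (elements of A are reals r with [inA c r]). *)
Inductive coef := CoefZ | CoefR.

Definition inA {R : realType} (c : coef) (r : R) : Prop :=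
  if c is CoefZ then r \is a Num.int else True.

Section Defs.
Context {R : realType}.

(* the standard 1-simplex, identified with [0,1] *)
Definition unit_itv : set R := [set t | 0 <= t <= 1].

(* singular 1-simplices of X: maps R -> X continuous on [0,1]
   (only their restriction to [0,1] matters, see [cochain1_wd]) *)
Definition simplex1 {X : topologicalType} (s : R -> X) : Prop :=
  {within unit_itv, continuous s}.

Definition Delta2 : set (R * R) :=
  [set p | 0 <= p.1 /\ 0 <= p.2 /\ p.1 + p.2 <= 1].

Definition simplex2 {X : topologicalType} (t : R * R -> X) : Prop :=
  {within Delta2, continuous t}.

Definition e0 : R * R := (0, 0).
Definition e1 : R * R := (1, 0).
Definition e2 : R * R := (0, 1).

Definition edge (p q : R * R) : R -> R * R :=
  fun u => ((1 - u) * p.1 + u * q.1, (1 - u) * p.2 + u * q.2).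

Definition cochain1_wd {X : topologicalType} (alpha : (R -> X) -> R) : Prop :=
  forall s s' : R -> X, simplex1 s -> simplex1 s' ->
    (forall t, unit_itv t -> s t = s' t) -> alpha s = alpha s'.

(* real singular 1-cocycle: (d alpha)(tau) = alpha(d0 tau) - alpha(d1 tau)
   + alpha(d2 tau) = 0 for every singular 2-simplex tau *)
Definition cocycle1 {X : topologicalType} (alpha : (R -> X) -> R) : Prop :=
  cochain1_wd alpha /\
  forall tau : R * R -> X, simplex2 tau ->
    alpha (tau \o edge e1 e2) - alpha (tau \o edge e0 e2)
      + alpha (tau \o edge e0 e1) = 0.

(* d theta = pi^* alpha, for a 0-cochain theta on Y *)
Definition d_theta_eq {X Y : topologicalType} (pi : Y -> X)
    (alpha : (R -> X) -> R) (theta : Y -> R) : Prop :=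
  forall s : R -> Y, simplex1 s -> theta (s 1) - theta (s 0) = alpha (pi \o s).

(* g^* [alpha] = [alpha] in H^1(X;R): g^* alpha - alpha is a coboundary *)
Definition preserves_class {X : topologicalType} (alpha : (R -> X) -> R)
    (g : X -> X) : Prop :=
  exists f : X -> R, forall s : R -> X, simplex1 s ->
    alpha (g \o s) = alpha s + (f (s 1) - f (s 0)).

Definition path_connected (X : topologicalType) : Prop :=
  forall x y : X, exists2 s : R -> X, simplex1 s & s 0 = x /\ s 1 = y.
End Defs.

Definition homeo {X Y : topologicalType} (f : X -> Y) : Prop :=
  continuous f /\ exists f' : Y -> X,
    [/\ cancel f f', cancel f' f & continuous f'].

Definition principal_bundle {R : realType} {X Y : topologicalType} (c : coef)
    (pi : Y -> X) (T : R -> Y -> Y) : Prop :=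
  [/\ continuous pi,
    (forall r, inA c r -> continuous (T r)),
    (forall y, T 0 y = y),
    (forall r s y, inA c r -> inA c s -> T (r + s) y = T r (T s y)) &
    [/\ (forall r y, inA c r -> pi (T r y) = pi y),
      (forall y y', pi y = pi y' -> exists2 r, inA c r & y' = T r y),
      (forall r y, inA c r -> T r y = y -> r = 0) &
      (* local triviality: pi^-1(U) = disjoint union over r in A of the open
         sets T r (s U), each mapped homeomorphically onto U by pi *)
      (forall x : X, exists U : set X, [/\ open U, U x &
         exists s : X -> Y, [/\ {within U, continuous s},
           (forall u, U u -> pi (s u) = u) &
           (forall r, inA c r -> open (T r @` (s @` U)))]])]].

Definition bundle_aut {R : realType} {X Y : topologicalType} (c : coef)
    (pi : Y -> X) (T : R -> Y -> Y) (gh : Y -> Y) (g : X -> X) : Prop :=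
  [/\ homeo gh, (forall y, pi (gh y) = g (pi y)) &
      (forall r y, inA c r -> gh (T r y) = T r (gh y))].

Definition rho {R : realType} {X Y : Type} (pi : Y -> X) (theta : Y -> R)
    (gh : Y -> Y) (x : X) : R :=
  match pselect (exists y, pi y = x) with
  | left h => let y := proj1_sig (cid h) in theta (gh y) - theta y
  | right _ => 0
  end.

Notation borel X := (g_sigma_algebraType (@open X)).

Definition invariant_measure {R : realType} {X : ptopologicalType}
    (mu : probability (borel X) R) (g : X -> X) : Prop :=
  forall B : set (borel X), measurable B -> mu (g @^-1` B) = mu B.

(* Main.v *)
Require Import Defs.
From HB Require Import structures.
From mathcomp Require Import all_boot all_order all_algebra.
From mathcomp Require Import all_classical all_reals all_analysis.
Import Order.TTheory GRing.Theory Num.Theory.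
Import numFieldNormedType.Exports.
Local Open Scope classical_set_scope.
Local Open Scope ring_scope.

Section Helpers.
Context {R : realType}.

Lemma inA0 c : @inA R c 0.
Proof. by case: c => //=; rewrite rpred0. Qed.

Lemma inAD c (r s : R) : inA c r -> inA c s -> inA c (r + s).
Proof. by case: c => //= hr hs; rewrite rpredD. Qed.

Lemma inAMn c (r : R) n : inA c r -> inA c (r *+ n).
Proof.
move=> hr; elim: n => [|n IH]; first by rewrite mulr0n; apply: inA0.
by rewrite mulrSr; apply: inAD.
Qed.
End Helpers.

Lemma rho_indep {R : realType} {X Y : Type} (c : coef) (pi : Y -> X)
  (T : R -> Y -> Y) (theta : Y -> R) (f : Y -> Y) (x : X) (y : Y) :
  (forall y y', pi y = pi y' -> exists2 r, inA c r & y' = T r y) ->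
  (forall r y, inA c r -> theta (T r y) = theta y + r) ->
  (forall r y, inA c r -> f (T r y) = T r (f y)) ->
  pi y = x -> rho pi theta f x = theta (f y) - theta y.
Proof.
move=> fib th fT pyx; rewrite /rho; case: pselect => [hx|nx]; last first.
  by exfalso; apply: nx; exists y.
set y0 := proj1_sig (cid hx).
have py0 : pi y0 = x by rewrite /y0; case: (cid hx).
have [r Ar ->] := fib y0 y (etrans py0 (esym pyx)).
rewrite fT // !th //.
by rewrite opprD addrACA subrr addr0.
Qed.

Lemma iter_comm {R : realType} {Y : Type} (c : coef) (T : R -> Y -> Y)
  (f : Y -> Y) n :
  (forall r y, inA c r -> f (T r y) = T r (f y)) ->
  (forall r y, inA c r -> (iter n f) (T r y) = T r (iter n f y)).
Proof.
move=> fT r y Ar; elim: n => [|n IH] //=; by rewrite IH fT.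
Qed.

Lemma iter_T {R : realType} {Y : Type} (c : coef) (T : R -> Y -> Y)
  (f : Y -> Y) (y : Y) (r : R) :
  (forall y, T 0 y = y) ->
  (forall r s y, inA c r -> inA c s -> T (r + s) y = T r (T s y)) ->
  (forall r y, inA c r -> f (T r y) = T r (f y)) ->
  inA c r -> f y = T r y -> forall n, iter n f y = T (r *+ n) y.
Proof.
move=> T0 TD fT Ar fy; elim => [|n IH] /=; first by rewrite mulr0n T0.
have An : inA c (r *+ n) by apply: inAMn.
by rewrite IH fT // fy -TD // mulrSr.
Qed.

Lemma lim_Mn {R : realType} (r : R) :
  (fun n : nat => r *+ n / n%:R) @ \oo --> r.
Proof.
apply: cvg_near_cst; near=> n.
rewrite -[r *+ n]mulr_natr mulfK // pnatr_eq0 -lt0n.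
near: n; by exists 1%N.
Unshelve. all: by end_near.
Qed.

Theorem proposition2p8 (R : realType) (X : ptopologicalType) (Y : topologicalType)
    (c : coef) (pi : Y -> X) (T : R -> Y -> Y)
    (alpha : (R -> X) -> R) (theta : Y -> R)
    (g h : X -> X) (gh hh : Y -> Y) :
  @path_connected R X ->
  principal_bundle c pi T ->
  cocycle1 alpha ->
  d_theta_eq pi alpha theta ->
  (forall r y, inA c r -> theta (T r y) = theta y + r) ->
  homeo g -> preserves_class alpha g ->
  homeo h -> preserves_class alpha h ->
  bundle_aut c pi T gh g ->
  bundle_aut c pi T hh h ->
  (* (1) common fixed point *)
  (forall x : X, g x = x -> h x = x ->
     exists rg rh : R,
       [/\ (fun n : nat => rho pi theta (iter n gh) x / n%:R) @ \oo --> rg,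
           (fun n : nat => rho pi theta (iter n hh) x / n%:R) @ \oo --> rh &
           (fun n : nat => rho pi theta (iter n (gh \o hh)) x / n%:R) @ \oo
             --> rg + rh]) /\
  (* (2) common invariant Borel probability measure *)
  (forall mu : probability (borel X) R,
     invariant_measure mu g -> invariant_measure mu h ->
     mu.-integrable setT (fun x => (rho pi theta gh x)%:E) ->
     mu.-integrable setT (fun x => (rho pi theta hh x)%:E) ->
     mu.-integrable setT (fun x => (rho pi theta (gh \o hh) x)%:E) ->
     (\int[mu]_x (rho pi theta (gh \o hh) x)%:E =
        \int[mu]_x (rho pi theta gh x)%:E + \int[mu]_x (rho pi theta hh x)%:E)%E).
Proof.
move=> _ [_ _ T0 TD [piT fib _ loc]] _ _ th hg _ hh' _ [_ pig gT] [_ pih hT].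
have surj : forall x, exists y, pi y = x.
  move=> x; have [U [_ Ux [s [_ ps _]]]] := loc x.
  by exists (s x); apply: ps.
have ghhT : forall r y, inA c r -> (gh \o hh) (T r y) = T r ((gh \o hh) y).
  by move=> r y Ar /=; rewrite hT // gT.
have key : forall f, (forall r y, inA c r -> f (T r y) = T r (f y)) ->
    forall y r, inA c r -> f y = T r y ->
    forall n, rho pi theta (iter n f) (pi y) = r *+ n.
  move=> f fT y r Ar fy n.
  rewrite (@rho_indep _ _ _ c pi T theta _ _ y) //; last exact: iter_comm.
  have An : inA c (r *+ n) by apply: inAMn.
  by rewrite (@iter_T _ _ c T f y r T0 TD fT Ar fy) th // addrC addKr.
split.
  move=> x gx hx; have [y yx] := surj x; subst x.
  have [rg Ag ghy] : exists2 r, inA c r & gh y = T r y.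
    by apply: (fib y); rewrite pig gx.
  have [rh Ah hhy] : exists2 r, inA c r & hh y = T r y.
    by apply: (fib y); rewrite pih hx.
  exists rg, rh; split.
  - under eq_fun do rewrite (key _ gT y rg Ag ghy); exact: lim_Mn.
  - under eq_fun do rewrite (key _ hT y rh Ah hhy); exact: lim_Mn.
  - have ghhy : (gh \o hh) y = T (rg + rh) y.
      by rewrite /= hhy gT // ghy -TD // addrC.
    have Agh : inA c (rg + rh) by apply: inAD.
    under eq_fun do rewrite (key _ ghhT y _ Agh ghhy); exact: lim_Mn.
move=> mu _ muh ig ih igh.
have pt : forall x, rho pi theta (gh \o hh) x =
    rho pi theta gh (h x) + rho pi theta hh x.
  move=> x; have [y yx] := surj x; subst x.
  rewrite (@rho_indep _ _ _ c pi T theta _ _ y) //.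
  rewrite (@rho_indep _ _ _ c pi T theta _ _ (hh y)) //.
  rewrite (@rho_indep _ _ _ c pi T theta _ _ y) //.
  by rewrite /= addrA subrK.
have mh : measurable_fun setT (h : borel X -> borel X).
  apply: (@measurability _ _ (borel X) (borel X) setT h (@open X)); first by [].
  move=> _ [B oB <-]; apply: sub_gen_smallest; rewrite setTI.
  apply: open_comp => // x _; case: hh' => + _; exact.
have ihc : mu.-integrable setT (fun x => (rho pi theta gh (h x))%:E).
  have -> : (fun x => (rho pi theta gh (h x))%:E) =
     ((fun x => (rho pi theta (gh \o hh) x)%:E) \- (fun x => (rho pi theta hh x)%:E))%E.
    by apply/funext => x /=; rewrite pt -EFinB addrK.
  exact: integrableB.
have mf := measurable_int _ ig.
have inv : (\int[mu]_x (rho pi theta gh (h x))%:E = \int[mu]_x (rho pi theta gh x)%:E)%E.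
  transitivity (\int[mu]_(x in (h : borel X -> borel X) @^-1` [set: borel X])
     ((fun x : borel X => (rho pi theta gh x)%:E) \o h) x)%E.
    by [].
  rewrite -(integral_pushforward mh mf) //.
  have E := @eq_measure_integral _ _ _ setT mu
    (measure_function_pushforward__canonical__measure_function_Measure mu mh)
    (fun x : borel X => (rho pi theta gh x)%:E).
  apply: E => A mA _ /=.
  by rewrite /pushforward muh.
under eq_integral do rewrite pt EFinD.
by rewrite integralD // inv.
Qed.
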